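(* Assume $\lambda_1<\lambda_2$ and $\lambda_1<\lambda_3$, and fix $a,b>0$. Then for all sufficiently large $\Delta>0$ there exist constants $C>0$ and $\varepsilon>0$ such that for every $y=(y_2,y_3)\in\mathbb Z^2$ with $\min(y_2,y_3)<0$ and $\varphi(y)>C$: (a) $D_R(y):=\sum_{z\ne y} r_{yz}\,(\varphi(z)-\varphi(y))\le 0$; (b) $\varphi(y+M_F(y))-\varphi(y)<-5\varepsilon$, where $M_F(y)=(\lambda_2-\lambda_1,\lambda_3-\lambda_1)$.
   Context: Markov chain $Y(n)=(y_2,y_3)\in\mathbb Z^2$ (relative coordinates $y_j=x_j-x_1$ of the embedded chain of the 3-processor cascade model, time normalized so that $\lambda_1+\lambda_2+\lambda_3+\beta_{12}+\beta_{23}=1$, all parameters positive). Its transition probabilities are $p_{yz}=s_{yz}+r_{yz}$ for $z\ne y$, $p_{yy}=1-\sum_{z\ne y}p_{yz}$, where the free-dynamics part is $s_{y,y+(1,0)}=\lambda_2$, $s_{y,y+(0,1)}=\lambda_3$, $s_{y,y-(1,1)}=\lambda_1$ (others $0$), and the rollback part $r_{yz}$ (with $b_2=\lambda_2/(\lambda_2+\beta_{23})$) is: if $y_2>0$ and $y_3\le 0$: $r_{y,(0,y_3)}=\beta_{12}$; if $y_2<y_3$: $r_{y,(y_2,y_2)}$ receives $\beta_{23}$; if $0<y_3\le y_2$: $r_{y,(0,z_3)}$ receives $\beta_{12}(1-b_2)^{z_3}b_2$ for $0\le z_3<y_3$ and $\beta_{12}(1-b_2)^{y_3}$ for $z_3=y_3$;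 if $0<y_2<y_3$: $r_{y,(0,z_3)}$ receives $\beta_{12}(1-b_2)^{z_3}b_2$ for $0\le z_3\le y_2$ and $\beta_{12}(1-b_2)^{y_2+1}$ for $z_3=y_3$ (contributions to the same $z$ are added). Contour $L$: let $e(y)=ay_2^2+b(y_2-y_3)^2$; let $T_3$ be the point of the ellipse $\{e=1\}$ at which the outer normal has direction $(-\Delta,1)$ and $T_2$ the point at which it has direction $(1,-\Delta)$ (for large $\Delta$, $T_3$ lies in $\{y_2<0,y_3<0\}$ and $T_2$ in $\{y_3<0\}$); let $K_3=(0,u_3)$ be the intersection of the tangent line at $T_3$ with the $y_3$-axis and $K_2=(u_2,0)$ the intersection of the tangent line at $T_2$ with the $y_2$-axis ($u_2,u_3>0$). $L$ is the closed curve formed by the segment $K_3K_2$, the segment $K_2T_2$, the arc $T_2T_3$ of the ellipse passing through $(-a^{-1/2},-a^{-1/2})$, and the segment $T_3K_3$; every open ray from the origin meets $L$ exactly once. Define $\varphi(0)=0$ and, for $y\ne0$, $\varphi(y)>0$ as the unique number with $y/\varphi(y)\in L$. *)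

(* Defs.v *)
From HB Require Import structures.
From mathcomp Require Import all_boot all_order all_algebra.
From mathcomp Require Import boolp classical_sets reals.
Set Implicit Arguments. Unset Strict Implicit. Unset Printing Implicit Defensive.
Import Order.TTheory GRing.Theory Num.Theory.
Local Open Scope ring_scope.
Local Open Scope classical_set_scope.

(* Points of the plane: P = (P.1, P.2) = (y_2, y_3). *)

Definition ell {R : realType} (a b : R) (P : R * R) : R :=
  a * P.1 ^+ 2 + b * (P.1 - P.2) ^+ 2.

Definition grad_ell {R : realType} (a b : R) (P : R * R) : R * R :=
  (2 * (a * P.1 + b * (P.1 - P.2)), - (2 * (b * (P.1 - P.2)))).

Definition normal_dir {R : realType} (a b : R) (P n : R * R) : Prop :=
  exists k : R, 0 < k /\ grad_ell a b P = (k * n.1, k * n.2).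

Definition T3 {R : realType} (a b D : R) : R * R :=
  xget (0, 0) [set P | ell a b P = 1 /\ normal_dir a b P (- D, 1)].

Definition T2 {R : realType} (a b D : R) : R * R :=
  xget (0, 0) [set P | ell a b P = 1 /\ normal_dir a b P (1, - D)].

Definition tangent_line {R : realType} (a b : R) (P : R * R) : set (R * R) :=
  [set X | (grad_ell a b P).1 * (X.1 - P.1) + (grad_ell a b P).2 * (X.2 - P.2) = 0].

Definition K3 {R : realType} (a b D : R) : R * R :=
  xget (0, 0) [set X | X.1 = 0 /\ tangent_line a b (T3 a b D) X].

Definition K2 {R : realType} (a b D : R) : R * R :=
  xget (0, 0) [set X | X.2 = 0 /\ tangent_line a b (T2 a b D) X].

Definition segment {R : realType} (A B : R * R) : set (R * R) :=
  [set X | exists s : R, 0 <= s <= 1 /\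
     X = (A.1 + s * (B.1 - A.1), A.2 + s * (B.2 - A.2))].

Definition side {R : realType} (A B P : R * R) : R :=
  (B.1 - A.1) * (P.2 - A.2) - (B.2 - A.2) * (P.1 - A.1).

Definition Qpt {R : realType} (a : R) : R * R :=
  (- (Num.sqrt a)^-1, - (Num.sqrt a)^-1).

(* closed arc T2T3 of the ellipse passing through Qpt: the points of the ellipse
   lying (weakly) on the same side of the chord T2T3 as Qpt *)
Definition arcT2T3 {R : realType} (a b D : R) : set (R * R) :=
  [set P | ell a b P = 1 /\
     0 <= side (T2 a b D) (T3 a b D) P * side (T2 a b D) (T3 a b D) (Qpt a)].

Definition contourL {R : realType} (a b D : R) : set (R * R) :=
  segment (K3 a b D) (K2 a b D) `|` segment (K2 a b D) (T2 a b D)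
  `|` arcT2T3 a b D `|` segment (T3 a b D) (K3 a b D).

Definition phi {R : realType} (a b D : R) (y : R * R) : R :=
  if y == (0, 0) then 0
  else xget 0 [set t | 0 < t /\ contourL a b D (y.1 / t, y.2 / t)].

Definition ptR {R : realType} (y : int * int) : R * R := (y.1%:~R, y.2%:~R).

Definition rrate {R : realType} (l2 b12 b23 : R) (y z : int * int) : R :=
  let b2 := l2 / (l2 + b23) in
  let y2 := y.1 in let y3 := y.2 in
  let z3 := z.2 in
  (if (0 < y2) && (y3 <= 0) && (z == (0, y3)) then b12 else 0)
  + (if (y2 < y3) && (z == (y2, y2)) then b23 else 0)
  + (if (0 < y3) && (y3 <= y2) && (z.1 == 0) then
       (if (0 <= z3) && (z3 < y3) then b12 * (1 - b2) ^+ `|z3|%N * b2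
        else if z3 == y3 then b12 * (1 - b2) ^+ `|y3|%N else 0)
     else 0)
  + (if (0 < y2) && (y2 < y3) && (z.1 == 0) then
       (if (0 <= z3) && (z3 <= y2) then b12 * (1 - b2) ^+ `|z3|%N * b2 else 0)
       + (if z3 == y3 then b12 * (1 - b2) ^+ (`|y2|%N).+1 else 0)
     else 0).

(* a finite list of states containing the support of z |-> r_{yz} *)
Definition rsupp (y : int * int) : seq (int * int) :=
  [:: (y.1, y.1); (0, y.2)] ++ [seq (0, (k%:Z)%R) | k <- iota 0 (`|y.2|%N).+1].

Definition DR {R : realType} (l2 b12 b23 a b D : R) (y : int * int) : R :=
  \sum_(z <- undup (rsupp y) | z != y)
     rrate l2 b12 b23 y z * (phi a b D (ptR z) - phi a b D (ptR y)).

Definition MF {R : realType} (l1 l2 l3 : R) : R * R := (l2 - l1, l3 - l1).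

(* Main.v *)
Require Import Defs.
From HB Require Import structures.
From mathcomp Require Import all_boot all_order all_algebra.
From mathcomp Require Import boolp classical_sets reals.
From mathcomp Require Import zify ring lra.
Import Order.TTheory GRing.Theory Num.Theory.
Local Open Scope ring_scope.


Definition Bf {R : realType} (a b : R) (P X : R * R) : R :=
  a * P.1 * X.1 + b * (P.1 - P.2) * (X.1 - X.2).
Definition lf {R : realType} (f X : R * R) : R := f.1 * X.1 + f.2 * X.2.
Definition gh {R : realType} (a b : R) (P : R * R) : R * R :=
  (a * P.1 + b * (P.1 - P.2), - (b * (P.1 - P.2))).

Lemma lf_gh {R : realType} (a b : R) P X : lf (gh a b P) X = Bf a b P X.
Proof. rewrite /lf /gh /Bf /=; ring. Qed.

Lemma ell_Bf {R : realType} (a b : R) P : ell a b P = Bf a b P P.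
Proof. rewrite /ell /Bf; ring. Qed.

Lemma CS {R : realType} (a b : R) P X : 0 < a -> 0 < b ->
  ell a b P = 1 -> ell a b X = 1 -> Bf a b P X <= 1.
Proof.
move=> ha hb eP eX.
have h : (Bf a b P X)^+2 <= 1.
  have -> : 1 = ell a b P * ell a b X by rewrite eP eX mulr1.
  have -> : ell a b P * ell a b X = (Bf a b P X)^+2 +
     a*b*(P.1*(X.1-X.2) - (P.1-P.2)*X.1)^+2 by rewrite /ell /Bf; ring.
  rewrite lerDl; apply: mulr_ge0; [nra| exact: sqr_ge0].
nra.
Qed.

Lemma tangentE {R : realType} (a b : R) P X :
  tangent_line a b P X <-> Bf a b P X = ell a b P.
Proof.
rewrite /tangent_line /grad_ell /= /Bf /ell; split => h.
  apply/eqP; rewrite -subr_eq0; apply/eqP.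
  have -> : a * P.1 * X.1 + b * (P.1 - P.2) * (X.1 - X.2) - (a * P.1 ^+ 2 + b * (P.1 - P.2) ^+ 2)
    = (2 * (a * P.1 + b * (P.1 - P.2)) * (X.1 - P.1) + - (2 * (b * (P.1 - P.2))) * (X.2 - P.2))/2 by field.
  by rewrite h mul0r.
have -> : 2 * (a * P.1 + b * (P.1 - P.2)) * (X.1 - P.1) + - (2 * (b * (P.1 - P.2))) * (X.2 - P.2)
  = 2 * ((a * P.1 * X.1 + b * (P.1 - P.2) * (X.1 - X.2)) - (a * P.1 ^+ 2 + b * (P.1 - P.2) ^+ 2)) by ring.
by rewrite h subrr mulr0.
Qed.
Lemma sum_gt1 {R : realType} {B m n : R} : B < 1 -> 0 < m -> 0 < n ->
  m ^+ 2 + n ^+ 2 + 2 * m * n * B = 1 -> 1 < m + n.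
Proof. move=> hB hm hn h.
have h1 : 1 < (m + n) ^+ 2.
  have -> : (m + n) ^+ 2 = (m ^+ 2 + n ^+ 2 + 2 * m * n * B) + 2 * (m * n) * (1 - B) by ring.
  rewrite h.
  rewrite ltrDl. have hmn : 0 < m * n := mulr_gt0 hm hn. have : 0 < 1 - B by lra. nra.
nra. Qed.
Lemma sum_ge1 {R : realType} {B m n : R} : B < 1 -> 0 <= m -> 0 <= n ->
  m ^+ 2 + n ^+ 2 + 2 * m * n * B = 1 -> 1 <= m + n.
Proof. move=> hB hm hn h.
have h1 : 1 <= (m + n) ^+ 2.
  have -> : (m + n) ^+ 2 = (m ^+ 2 + n ^+ 2 + 2 * m * n * B) + 2 * (m * n) * (1 - B) by ring.
  rewrite h.
  rewrite lerDl. have hmn : 0 <= m * n := mulr_ge0 hm hn. have : 0 < 1 - B by lra. nra.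
nra. Qed.
Lemma mn_pos {R : realType} {B m n : R} : B < 1 -> 1 <= m + n ->
  m ^+ 2 + n ^+ 2 + 2 * m * n * B = 1 -> 0 <= m /\ 0 <= n.
Proof. move=> hB hs h.
have key : forall u v : R, 1 <= u + v -> u ^+ 2 + v ^+ 2 + 2 * u * v * B = 1 -> 0 <= u.
  move=> u v hs' h'; rewrite leNgt; apply/negP => hu.
  have hv : 0 < v by lra.
  have h1 : 1 <= (u + v) ^+ 2 by nra.
  have : (u + v) ^+ 2 = (u ^+ 2 + v ^+ 2 + 2 * u * v * B) + 2 * (u * v) * (1 - B) by ring.
  rewrite h'.
  have : u * v < 0 by nra.
  nra.
split; first exact: (key m n).
apply: (key n m); first lra.
by rewrite -[RHS]h; ring.
Qed.

Lemma seg_lf {R : realType} {A B W f : R * R} : segment A B W ->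
  lf f A <= 1 -> lf f B <= 1 -> lf f W <= 1.
Proof.
case=> s [/andP [s0 s1] ->] hA hB.
have -> : lf f (A.1 + s * (B.1 - A.1), A.2 + s * (B.2 - A.2)) = (1 - s) * lf f A + s * lf f B.
  by rewrite /lf /=; ring.
nra.
Qed.

Lemma seg_lfE {R : realType} {A B W f : R * R} {c : R} : segment A B W ->
  lf f A = c -> lf f B = c -> lf f W = c.
Proof.
case=> s [/andP [s0 s1] ->] hA hB.
have -> : lf f (A.1 + s * (B.1 - A.1), A.2 + s * (B.2 - A.2)) = (1 - s) * lf f A + s * lf f B.
  by rewrite /lf /=; ring.
rewrite hA hB; ring.
Qed.
Lemma intneg (R : realType) (y : int) : y < 0 -> (y%:~R : R) <= -1.
Proof. move=> h. have h1 : y + 1 <= 0 by lia.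
have : ((y + 1)%:~R : R) <= 0%:~R by rewrite ler_int.
rewrite intrD. have -> : (1%:~R : R) = 1 by []. have -> : (0%:~R : R) = 0 by [].
move=> h2. lra.
Qed.


Section Geo.
Variables (R : realType) (a b D x2 y2 x3 y3 u2 u3 : R).
Hypotheses (ha : 0 < a) (hb : 0 < b) (hD : 1 < D) (hDb : a < b * (D - 1)).
Hypotheses (e2 : a * x2 ^+ 2 + b * (x2 - y2) ^+ 2 = 1) (q2 : 0 < x2 - y2)
  (x2e : a * D * x2 = - (b * (x2 - y2) * (D - 1))).
Hypotheses (e3 : a * x3 ^+ 2 + b * (x3 - y3) ^+ 2 = 1) (p3 : 0 < y3 - x3)
  (x3e : a * x3 = - (b * (y3 - x3) * (D - 1))).
Hypotheses (k2b : a * x2 * u2 + b * (x2 - y2) * u2 = 1)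
  (k3b : b * (y3 - x3) * u3 = 1).

Ltac cp := move: (ha) (hb) (hD) (hDb) (q2) (p3) => ? ? ? ? ? ?.

Lemma x2n : x2 < 0.
Proof. cp. have hp : 0 < a * D by nra.
have : a * D * x2 < 0 by rewrite x2e oppr_lt0; apply: mulr_gt0; [nra|lra].
by rewrite pmulr_rlt0. Qed.
Lemma y2n : y2 < 0. Proof. cp; have := x2n; lra. Qed.
Lemma x3n : x3 < 0.
Proof. cp. have : a * x3 < 0 by rewrite x3e oppr_lt0; apply: mulr_gt0; [nra|lra].
by rewrite pmulr_rlt0. Qed.
Lemma y3n : y3 < 0.
Proof.
have : a * y3 = (y3 - x3) * (a - b * (D - 1)).
  have -> : a * y3 = a * x3 + a * (y3 - x3) by ring.
  rewrite x3e; ring.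
move=> h; cp; have : a * y3 < 0 by rewrite h pmulr_rlt0 //; lra.
by rewrite pmulr_rlt0. Qed.

Lemma B2E X : D * Bf a b (x2, y2) X = b * (x2 - y2) * (X.1 - D * X.2).
Proof. rewrite /Bf /=. have -> : D * (a * x2 * X.1 + b * (x2 - y2) * (X.1 - X.2)) = (a * D * x2) * X.1 + D * b * (x2 - y2) * (X.1 - X.2) by ring.
rewrite x2e; ring. Qed.
Lemma B3E X : Bf a b (x3, y3) X = b * (y3 - x3) * (X.2 - D * X.1).
Proof. rewrite /Bf /= x3e; ring. Qed.

Lemma u2E : u2 = x2 - D * y2.
Proof.
have h1 := B2E (u2, 0). have h2 := B2E (x2, y2).
have : Bf a b (x2, y2) (u2, 0) = 1 by rewrite /Bf /= -k2b; ring.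
have : Bf a b (x2, y2) (x2, y2) = 1 by rewrite /Bf /= -e2; ring.
move=> H2 H1; cp; rewrite H1 in h1; rewrite H2 in h2; move: h1 h2 => /= h1 h2.
have hq : 0 < b * (x2 - y2) by nra.
apply: (mulfI (lt0r_neq0 hq)). rewrite -mulrA. nra.
Qed.
Lemma u3E : u3 = y3 - D * x3.
Proof.
have h2 := B3E (x3, y3).
have : Bf a b (x3, y3) (x3, y3) = 1 by rewrite /Bf /= -e3; ring.
move=> H; cp; rewrite H /= in h2.
have hq : 0 < b * (y3 - x3) by nra.
apply: (mulfI (lt0r_neq0 hq)). rewrite k3b. done.
Qed.
Lemma u2p : 0 < u2. Proof. cp; rewrite u2E; have := y2n; have := x2n; nra. Qed.
Lemma u3p : 0 < u3. Proof. cp; rewrite u3E; have := y3n; have := x3n; nra. Qed.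

Definition cr := x2 * y3 - y2 * x3.
Lemma crn : cr < 0.
Proof. cp; rewrite /cr. have -> : x2 * y3 - y2 * x3 = x2 * (y3 - x3) + (x2 - y2) * x3 by ring.
have := x2n; have := x3n; nra. Qed.

Definition B23 := Bf a b (x2, y2) (x3, y3).
Lemma B23lt : B23 < 1.
Proof.
cp; have h : B23 ^+ 2 < 1.
  have -> : 1 = (a * x2 ^+ 2 + b * (x2 - y2) ^+ 2) * (a * x3 ^+ 2 + b * (x3 - y3) ^+ 2) by rewrite e2 e3 mulr1.
  have -> : (a * x2 ^+ 2 + b * (x2 - y2) ^+ 2) * (a * x3 ^+ 2 + b * (x3 - y3) ^+ 2) = B23^+2 +
     a*b*(x2*(x3-y3) - (x2-y2)*x3)^+2 by rewrite /B23 /Bf /=; ring.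
  rewrite ltrDl; apply: mulr_gt0; first nra.
  have : 0 < x2 * (y3 - x3) * -1 + (x2 - y2) * (- x3).
    have := x2n; have := x3n; nra.
  move=> h; apply: exprn_gt0. nra.
nra.
Qed.

Definition pt (m n : R) : R * R := (m * x2 + n * x3, m * y2 + n * y3).

Lemma ell_pt m n : ell a b (pt m n) = m ^+ 2 + n ^+ 2 + 2 * m * n * B23.
Proof.
have -> : m ^+ 2 + n ^+ 2 + 2 * m * n * B23 = m ^+ 2 * (a * x2 ^+ 2 + b * (x2 - y2) ^+ 2) + n ^+ 2 * (a * x3 ^+ 2 + b * (x3 - y3) ^+ 2) + 2 * m * n * B23 by rewrite e2 e3 !mulr1.
rewrite /ell /pt /B23 /Bf /=; ring.
Qed.

Lemma Bf_pt m n X : Bf a b (pt m n) X = m * Bf a b (x2, y2) X + n * Bf a b (x3, y3) X.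
Proof. rewrite /Bf /pt /=; ring. Qed.

Lemma side_pt m n : side (x2, y2) (x3, y3) (pt m n) = - cr * (m + n - 1).
Proof. rewrite /side /pt /cr /=; ring. Qed.

Definition mu (W : R * R) := (W.1 * y3 - W.2 * x3) / cr.
Definition nu (W : R * R) := (x2 * W.2 - y2 * W.1) / cr.
Lemma cramer W : W = pt (mu W) (nu W).
Proof.
have hc : cr != 0 by apply: ltr0_neq0; apply: crn.
case: W => w1 w2; rewrite /pt /mu /nu /=; congr pair; rewrite /cr in hc *; field; done.
Qed.


Definition arcS : set (R * R) := [set P | ell a b P = 1 /\
   0 <= side (x2, y2) (x3, y3) P * side (x2, y2) (x3, y3) (Qpt a)].

Lemma ell_pt1 m n : ell a b (pt m n) = 1 -> m ^+ 2 + n ^+ 2 + 2 * m * n * B23 = 1.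
Proof. by rewrite ell_pt. Qed.

Lemma sideQ : 0 < side (x2, y2) (x3, y3) (Qpt a).
Proof.
cp. have hc := crn.
set r := (Num.sqrt a)^-1.
have hr : 0 < r by rewrite invr_gt0 sqrtr_gt0.
have eQ : ell a b (Qpt a) = 1.
  rewrite /ell /Qpt /= subrr expr0n /= mulr0 addr0 sqrrN exprVn sqr_sqrtr; last exact: ltW.
  by rewrite mulfV // lt0r_neq0.
rewrite (cramer (Qpt a)) side_pt.
have hmu : 0 < mu (Qpt a).
  rewrite /mu /Qpt /=. rewrite -/r. rewrite nmulr_lgt0 ?invr_lt0 //.
  have -> : - r * y3 - - r * x3 = - (r * (y3 - x3)) by ring.
  rewrite oppr_lt0; exact: mulr_gt0.
have hnu : 0 < nu (Qpt a).
  rewrite /nu /Qpt /=. rewrite -/r. rewrite nmulr_lgt0 ?invr_lt0 //.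
  have -> : x2 * - r - y2 * - r = - (r * (x2 - y2)) by ring.
  rewrite oppr_lt0; exact: mulr_gt0.
have eQ' : ell a b (pt (mu (Qpt a)) (nu (Qpt a))) = 1 by rewrite -cramer.
have h1 := sum_gt1 B23lt hmu hnu (ell_pt1 _ _ eQ').
nra.
Qed.

Lemma arc_cone W : arcS W -> [/\ 0 <= mu W, 0 <= nu W & 1 <= mu W + nu W].
Proof.
case=> eW hs. have hc := crn. have hQ := sideQ.
rewrite (cramer W) side_pt in hs. rewrite (cramer W) in eW.
have h1 : 1 <= mu W + nu W.
  set s := side _ _ _ in hs hQ. set m := mu W in hs *. set n := nu W in hs *.
  have : 0 <= (m + n - 1) * (- cr * s).
    by have -> : (m + n - 1) * (- cr * s) = - cr * (m + n - 1) * s by ring.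
  rewrite pmulr_lge0; first lra. apply: mulr_gt0 => //; lra.
have [hm hn] := mn_pos B23lt h1 (ell_pt1 _ _ eW).
by split.
Qed.

Lemma cone_arc m n : 0 <= m -> 0 <= n -> ell a b (pt m n) = 1 -> arcS (pt m n).
Proof.
move=> hm hn e; split => //. rewrite side_pt.
have h1 := sum_ge1 B23lt hm hn (ell_pt1 _ _ e).
have hc := crn. have hQ := sideQ.
apply: mulr_ge0; last exact: ltW.
apply: mulr_ge0; lra.
Qed.

Definition Lc : set (R * R) :=
  setU (setU (setU (segment (0, u3) (u2, 0)) (segment (u2, 0) (x2, y2))) arcS)
    (segment (x3, y3) (0, u3)).

Definition Good (f : R * R) := forall W, Lc W -> lf f W <= 1.

Lemma good_end f : lf f (u2, 0) <= 1 -> lf f (0, u3) <= 1 -> lf f (x2, y2) <= 1 ->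
  lf f (x3, y3) <= 1 ->
  (forall m n, 0 <= m -> 0 <= n -> ell a b (pt m n) = 1 -> lf f (pt m n) <= 1) -> Good f.
Proof.
move=> hK2 hK3 hT2 hT3 harc W [[[]|]|] hW.
- exact: seg_lf hW hK3 hK2.
- exact: seg_lf hW hK2 hT2.
- have [hm hn _] := arc_cone W hW. case: hW => eW _.
  rewrite (cramer W) in eW *; exact: harc.
- exact: seg_lf hW hT3 hK3.
Qed.

Lemma BT2K2 : Bf a b (x2, y2) (u2, 0) = 1.
Proof. by rewrite /Bf /= subr0 -k2b; ring. Qed.
Lemma BT3K3 : Bf a b (x3, y3) (0, u3) = 1.
Proof. by rewrite /Bf /= -k3b; ring. Qed.
Lemma BT2T2 : Bf a b (x2, y2) (x2, y2) = 1.
Proof. by rewrite -ell_Bf /ell. Qed.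
Lemma BT3T3 : Bf a b (x3, y3) (x3, y3) = 1.
Proof. by rewrite -ell_Bf /ell. Qed.

Lemma BT3K2 : Bf a b (x3, y3) (u2, 0) <= Bf a b (x3, y3) (x2, y2).
Proof.
rewrite !B3E /= u2E. cp. have := y2n. move=> hy.
have hp : 0 < b * (y3 - x3) by nra.
rewrite ler_pM2l //.
have h1 : 0 < (D - 1) * (- y2) by nra.
have h2 : 0 < (D + 1) * ((D - 1) * (- y2)) by apply: mulr_gt0 => //; lra.
nra.
Qed.
Lemma BT2K3 : Bf a b (x2, y2) (0, u3) <= Bf a b (x2, y2) (x3, y3).
Proof.
cp. have hD0 : 0 < D by lra.
rewrite -(ler_pM2l hD0) !B2E /= u3E. have := x3n. move=> hx.
have hp : 0 < b * (x2 - y2) by nra.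
rewrite ler_pM2l //.
have h1 : 0 < (D - 1) * (- x3) by nra.
have h2 : 0 < (D + 1) * ((D - 1) * (- x3)) by apply: mulr_gt0 => //; lra.
nra.
Qed.

Definition l1 : R * R := (u2^-1, u3^-1).

Lemma lf_pt f m n : lf f (pt m n) = m * lf f (x2, y2) + n * lf f (x3, y3).
Proof. rewrite /lf /pt /=; ring. Qed.

Lemma good_l1 : Good l1.
Proof.
have hu2 := u2p. have hu3 := u3p.
have i2 : 0 < u2^-1 by rewrite invr_gt0. have i3 : 0 < u3^-1 by rewrite invr_gt0.
have hT2 : lf l1 (x2, y2) < 0.
  rewrite /lf /l1 /=. have := x2n; have := y2n. move=> h1 h2.
  have : u2^-1 * x2 < 0 by rewrite pmulr_rlt0.
  have : u3^-1 * y2 < 0 by rewrite pmulr_rlt0.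
  lra.
have hT3 : lf l1 (x3, y3) < 0.
  rewrite /lf /l1 /=. have := x3n; have := y3n. move=> h1 h2.
  have : u2^-1 * x3 < 0 by rewrite pmulr_rlt0.
  have : u3^-1 * y3 < 0 by rewrite pmulr_rlt0.
  lra.
apply: good_end.
- by rewrite /lf /l1 /= mulr0 addr0 mulVf // lt0r_neq0.
- by rewrite /lf /l1 /= mulr0 add0r mulVf // lt0r_neq0.
- lra.
- lra.
- move=> m n hm hn _; rewrite lf_pt. nra.
Qed.

Lemma good_gh m0 n0 : 0 <= m0 -> 0 <= n0 -> ell a b (pt m0 n0) = 1 -> Good (gh a b (pt m0 n0)).
Proof.
move=> hm hn e.
have eT2 : ell a b (x2, y2) = 1 by [].
have eT3 : ell a b (x3, y3) = 1 by [].
apply: good_end; rewrite ?lf_gh.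
- apply: (le_trans _ (CS _ _ _ _ ha hb e eT2)). rewrite !Bf_pt BT2K2 BT2T2.
  have := BT3K2. move=> h. apply: lerD => //. exact: ler_wpM2l.
- apply: (le_trans _ (CS _ _ _ _ ha hb e eT3)). rewrite !Bf_pt BT3K3 BT3T3.
  have := BT2K3. move=> h. apply: lerD => //. exact: ler_wpM2l.
- exact: CS.
- exact: CS.
- move=> m n _ _ e'; rewrite lf_gh; exact: CS.
Qed.

Lemma pt10 : pt 1 0 = (x2, y2).
Proof. by rewrite /pt !mul1r !mul0r !addr0. Qed.
Lemma pt01 : pt 0 1 = (x3, y3).
Proof. by rewrite /pt !mul1r !mul0r !add0r. Qed.

Lemma good_T2 : Good (gh a b (x2, y2)).
Proof. rewrite -pt10; apply: good_gh; rewrite ?ler01 ?lexx // pt10 //. Qed.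
Lemma good_T3 : Good (gh a b (x3, y3)).
Proof. rewrite -pt01; apply: good_gh; rewrite ?ler01 ?lexx // pt01 //. Qed.

Variables (m2 m3 : R).
Hypotheses (hm2 : 0 < m2) (hm3 : 0 < m3) (hM2 : m2 < D * m3) (hM3 : m3 < D * m2).

Definition mx := Num.max (Bf a b (x2, y2) (m2, m3)) (Bf a b (x3, y3) (m2, m3)).

Lemma mxn : mx < 0.
Proof.
cp. move: (hm2) (hm3) (hM2) (hM3) => ? ? ? ?.
rewrite /mx gt_max; apply/andP; split.
  have hD0 : 0 < D by lra.
  rewrite -(pmulr_rlt0 _ hD0) B2E /=.
  have : 0 < b * (x2 - y2) by nra.
  move=> h; rewrite pmulr_rlt0 //; lra.
rewrite B3E /=.
have : 0 < b * (y3 - x3) by nra.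
move=> h; rewrite pmulr_rlt0 //; lra.
Qed.

Definition Info (f Y : R * R) :=
  (0 <= Y.1 /\ 0 <= Y.2) \/
  [/\ lf f (m2, m3) <= mx, (Y.1 = 0 -> Y.2 < 0 -> 0 <= f.1) &
      (Y.1 = Y.2 -> Y.1 < 0 -> 0 <= f.2)].

Lemma support Y : Lc Y -> exists f, [/\ Good f, lf f Y = 1 & Info f Y].
Proof.
have hu2 := u2p. have hu3 := u3p.
move=> [[[]|]|] hY.
- exists l1; split; first exact: good_l1.
  + apply: (seg_lfE hY).
    * by rewrite /lf /l1 /= mulr0 add0r mulVf // lt0r_neq0.
    * by rewrite /lf /l1 /= mulr0 addr0 mulVf // lt0r_neq0.
  + left; case: hY => s [/andP [s0 s1] ->] /=; split; nra.
- exists (gh a b (x2, y2)); split; first exact: good_T2.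
  + apply: (seg_lfE hY); rewrite lf_gh ?BT2K2 ?BT2T2 //.
  + right; split.
    * by rewrite lf_gh /mx le_max lexx.
    * move=> _ _; rewrite /gh /=. cp.
      have hD0 : 0 < D by lra.
      have : D * (a * x2 + b * (x2 - y2)) = b * (x2 - y2).
        have -> : D * (a * x2 + b * (x2 - y2)) = a * D * x2 + D * (b * (x2 - y2)) by ring.
        rewrite x2e; ring.
      move=> h. have : 0 < D * (a * x2 + b * (x2 - y2)) by rewrite h; nra.
      rewrite pmulr_rgt0 //; exact: ltW.
    * case: hY => s [/andP [s0 s1] ->] /= h. exfalso. move: h. cp.
      have h1 : 0 <= (1 - s) * u2 by apply: mulr_ge0; lra.
      case: (ltrP 0 s) => hs.
        have : 0 < s * (x2 - y2) by apply: mulr_gt0.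
        move=> h2 h; nra.
      have -> : s = 0 by lra.
      rewrite !mul0r !addr0 => h; lra.
- have [hm hn _] := arc_cone Y hY. case: hY => eY _.
  rewrite (cramer Y) in eY *.
  exists (gh a b (pt (mu Y) (nu Y))); split.
  + exact: good_gh.
  + by rewrite lf_gh -ell_Bf.
  + right; split.
    * have hs : 1 <= mu Y + nu Y by apply: (sum_ge1 B23lt hm hn (ell_pt1 _ _ eY)).
      rewrite lf_gh Bf_pt.
      have h2 : Bf a b (x2, y2) (m2, m3) <= mx by rewrite /mx le_max lexx.
      have h3 : Bf a b (x3, y3) (m2, m3) <= mx by rewrite /mx le_max lexx orbT.
      have := mxn. nra.
    * move=> h1 h2; rewrite /gh h1. cp. rewrite /= in h2 *. nra.
    * move=> h1 _; rewrite /gh h1 /= subrr mulr0 oppr0 //.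
- exists (gh a b (x3, y3)); split; first exact: good_T3.
  + apply: (seg_lfE hY); rewrite lf_gh ?BT3K3 ?BT3T3 //.
  + right; split.
    * by rewrite lf_gh /mx le_max lexx orbT.
    * case: hY => s [/andP [s0 s1] ->] /= h1 h2. exfalso. move: h1 h2. cp.
      have := x3n. move=> hx.
      have -> : x3 + s * (0 - x3) = (1 - s) * x3 by ring.
      move=> h1. have hs : s = 1.
        move/eqP: h1; rewrite mulf_eq0 => /orP [|]; first by rewrite subr_eq0 => /eqP ->.
        move/eqP => h; lra.
      rewrite hs; lra.
    * move=> _ _; rewrite /gh /=. cp. nra.
Qed.

Lemma ell_pos (X : R * R) : X != (0, 0) -> 0 < ell a b X.
Proof.
case: X => w1 w2 hX; rewrite /ell /=. cp.
case: (eqVneq w1 0) => [h1|h1].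
  have h2 : w2 != 0 by apply: contraNneq hX => ->; rewrite h1.
  rewrite h1 expr0n /= mulr0 add0r sub0r sqrrN. apply: mulr_gt0 => //.
  by rewrite exprn_even_gt0 // h2 orbT.
have : 0 < a * w1 ^+ 2 by apply: mulr_gt0 => //; rewrite exprn_even_gt0 // h1 orbT.
have : 0 <= b * (w1 - w2) ^+ 2 by apply: mulr_ge0; [lra| exact: sqr_ge0].
lra.
Qed.

Lemma exB w1 w2 : w2 <= 0 -> w1 * y2 - w2 * x2 <= 0 -> ~ (w1 = 0 /\ w2 = 0) ->
  exists t, 0 < t /\ Lc (w1 / t, w2 / t).
Proof.
move=> h2 hE hX.
have hu2 := u2p. have hx2 := x2n. have hy2 := y2n.
have nu2 : u2 != 0 by rewrite lt0r_neq0. have ny2 : y2 != 0 by rewrite ltr0_neq0.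
have [be ebe] : exists be, be = w2 / y2 by eexists.
have [al eal] : exists al, al = (w1 - be * x2) / u2 by eexists.
have hbe : 0 <= be by rewrite ebe; apply: mulr_le0 => //; rewrite invr_le0 ltW.
have hal : 0 <= al.
  rewrite eal; apply: divr_ge0; last exact: ltW.
  rewrite ebe. have -> : w1 - w2 / y2 * x2 = (w1 * y2 - w2 * x2) / y2 by field.
  apply: mulr_le0 => //; rewrite invr_le0 ltW //.
have ew2 : w2 = be * y2 by rewrite ebe; field.
have ew1 : w1 = al * u2 + be * x2 by rewrite eal; field.
have ht : 0 < al + be.
  case: (ltrP 0 (al + be)) => // h; exfalso; apply: hX.
  have a0 : al = 0 by lra. have b0 : be = 0 by lra.
  by rewrite ew1 ew2 a0 b0 !mul0r addr0.
have nt : al + be != 0 by rewrite lt0r_neq0.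
exists (al + be); split => //. left; left; right.
exists (be / (al + be)); split.
  apply/andP; split; first by apply: divr_ge0 => //; exact: ltW.
  by rewrite ler_pdivrMr // mul1r lerDr.
rewrite ew1 ew2 /=; congr pair; by field.
Qed.

Lemma exC w1 w2 : w1 <= 0 -> w2 * x3 - w1 * y3 <= 0 -> ~ (w1 = 0 /\ w2 = 0) ->
  exists t, 0 < t /\ Lc (w1 / t, w2 / t).
Proof.
move=> h1 hE hX.
have hu3 := u3p. have hx3 := x3n. have hy3 := y3n.
have nu3 : u3 != 0 by rewrite lt0r_neq0. have nx3 : x3 != 0 by rewrite ltr0_neq0.
have [be ebe] : exists be, be = w1 / x3 by eexists.
have [al eal] : exists al, al = (w2 - be * y3) / u3 by eexists.
have hbe : 0 <= be by rewrite ebe; apply: mulr_le0 => //; rewrite invr_le0 ltW.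
have hal : 0 <= al.
  rewrite eal; apply: divr_ge0; last exact: ltW.
  rewrite ebe. have -> : w2 - w1 / x3 * y3 = (w2 * x3 - w1 * y3) / x3 by field.
  apply: mulr_le0 => //; rewrite invr_le0 ltW //.
have ew1 : w1 = be * x3 by rewrite ebe; field.
have ew2 : w2 = al * u3 + be * y3 by rewrite eal; field.
have ht : 0 < al + be.
  case: (ltrP 0 (al + be)) => // h; exfalso; apply: hX.
  have a0 : al = 0 by lra. have b0 : be = 0 by lra.
  by rewrite ew1 ew2 a0 b0 !mul0r addr0.
have nt : al + be != 0 by rewrite lt0r_neq0.
exists (al + be); split => //. right.
exists (al / (al + be)); split.
  apply/andP; split; first by apply: divr_ge0 => //; exact: ltW.
  by rewrite ler_pdivrMr // mul1r lerDl.
rewrite ew1 ew2 /=; congr pair; by field.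
Qed.

Lemma exD w1 w2 : 0 <= w1 * y2 - w2 * x2 -> 0 <= w2 * x3 - w1 * y3 -> (w1, w2) != (0, 0) ->
  exists t, 0 < t /\ Lc (w1 / t, w2 / t).
Proof.
move=> hE2 hE3 hX.
have hc := crn. have nc : cr != 0 by rewrite ltr0_neq0.
have he := ell_pos _ hX.
set t := Num.sqrt (ell a b (w1, w2)).
have ht : 0 < t by rewrite sqrtr_gt0.
have nt : t != 0 by rewrite lt0r_neq0.
have ht2 : t ^+ 2 = ell a b (w1, w2) by rewrite sqr_sqrtr // ltW.
exists t; split => //. left; right.
have hm : 0 <= mu (w1, w2) / t.
  apply: divr_ge0; last exact: ltW.
  rewrite /mu /=. have -> : (w1 * y3 - w2 * x3) / cr = (w2 * x3 - w1 * y3) * (- cr)^-1.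
    by rewrite invrN mulrN -mulNr opprB.
  apply: mulr_ge0 => //; rewrite invr_ge0; lra.
have hn : 0 <= nu (w1, w2) / t.
  apply: divr_ge0; last exact: ltW.
  rewrite /nu /=. have -> : (x2 * w2 - y2 * w1) / cr = (w1 * y2 - w2 * x2) * (- cr)^-1.
    by rewrite invrN mulrN -mulNr; congr (_ * _); ring.
  apply: mulr_ge0 => //; rewrite invr_ge0; lra.
have -> : (w1 / t, w2 / t) = pt (mu (w1, w2) / t) (nu (w1, w2) / t).
  have e := cramer (w1, w2). rewrite /pt /= in e *. case: e => f1 f2.
  congr pair; [rewrite [in LHS]f1 | rewrite [in LHS]f2]; field; done.
apply: cone_arc => //.
have -> : pt (mu (w1, w2) / t) (nu (w1, w2) / t) = ((w1 / t), (w2 / t)).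
  have e := cramer (w1, w2). rewrite /pt /= in e *. case: e => f1 f2.
  congr pair; [rewrite [in RHS]f1 | rewrite [in RHS]f2]; field; done.
rewrite /ell /= in ht2 *.
have -> : a * (w1 / t) ^+ 2 + b * (w1 / t - w2 / t) ^+ 2 = (a * w1 ^+ 2 + b * (w1 - w2) ^+ 2) / t ^+ 2.
  by field.
by rewrite -ht2 mulfV // expf_neq0.
Qed.

Lemma exist_t (X : R * R) : X != (0, 0) -> exists t, 0 < t /\ Lc (X.1 / t, X.2 / t).
Proof.
have hu2 := u2p. have hu3 := u3p. have hx2 := x2n. have hy2 := y2n.
have hx3 := x3n. have hy3 := y3n.
have nu2 : u2 != 0 by rewrite lt0r_neq0. have nu3 : u3 != 0 by rewrite lt0r_neq0.
case: X => w1 w2 hX /=.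
have hX' : ~ (w1 = 0 /\ w2 = 0) by move=> [h1 h2]; move: hX; rewrite h1 h2 eqxx.
case: (lerP 0 w1) => h1; case: (lerP 0 w2) => h2.
-
  have [t et] : exists t, t = w1 / u2 + w2 / u3 by eexists.
  have i2 : 0 < u2^-1 by rewrite invr_gt0. have i3 : 0 < u3^-1 by rewrite invr_gt0.
  have ht : 0 < t.
    rewrite et; case: (ltrP 0 w1) => h1'.
      have : 0 < w1 / u2 by apply: mulr_gt0.
      have : 0 <= w2 / u3 by apply: mulr_ge0 => //; exact: ltW.
      lra.
    have e1 : w1 = 0 by lra.
    case: (ltrP 0 w2) => h2'.
      have : 0 < w2 / u3 by apply: mulr_gt0.
      rewrite e1 mul0r; lra.
    by exfalso; apply: hX'; split; lra.
  exists t; split => //. left; left; left.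
  exists ((w1 / u2) / t); split.
    apply/andP; split; first by apply: divr_ge0; [apply: mulr_ge0 => //; exact: ltW| exact: ltW].
    rewrite ler_pdivrMr // mul1r et lerDl; apply: mulr_ge0 => //; exact: ltW.
  have nt : t != 0 by rewrite lt0r_neq0.
  congr pair => /=; first by field; rewrite nt nu2.
  have -> : w2 = u3 * (t - w1 / u2) by rewrite et; field; rewrite nu2 nu3.
  by field; rewrite nu2 nt.
- apply: exB; [exact: ltW| |exact: hX'].
  have : w1 * y2 <= 0 by apply: mulr_ge0_le0 => //; exact: ltW.
  have : 0 < w2 * x2 by rewrite nmulr_rgt0.
  lra.
- apply: exC; [exact: ltW| |exact: hX'].
  have : w2 * x3 <= 0 by apply: mulr_ge0_le0 => //; exact: ltW.
  have : 0 < w1 * y3 by rewrite nmulr_rgt0.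
  lra.
- case: (lerP (w1 * y2 - w2 * x2) 0) => hE2.
    by apply: exB => //; exact: ltW.
  case: (lerP (w2 * x3 - w1 * y3) 0) => hE3.
    by apply: exC => //; exact: ltW.
  by apply: exD => //; exact: ltW.
Qed.


Hypotheses (hT2 : T2 a b D = (x2, y2)) (hT3 : T3 a b D = (x3, y3))
  (hK2 : K2 a b D = (u2, 0)) (hK3 : K3 a b D = (0, u3)).

Lemma contourE : contourL a b D = Lc.
Proof. by rewrite /contourL /arcT2T3 hT2 hT3 hK2 hK3. Qed.

Lemma phi_spec X : X != (0, 0) ->
  0 < phi a b D X /\ Lc (X.1 / phi a b D X, X.2 / phi a b D X).
Proof.
move=> hX; rewrite /phi (negbTE hX) contourE.
have [t ht] := exist_t X hX.
have h := @xgetI R 0 [set t | 0 < t /\ Lc (X.1 / t, X.2 / t)] t ht. exact: h.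
Qed.

Lemma lf_div (f X : R * R) (t : R) : lf f (X.1 / t, X.2 / t) = lf f X / t.
Proof. rewrite /lf /=; rewrite mulrDl !mulrA //. Qed.

Lemma phi_ge X f : X != (0, 0) -> Good f -> lf f X <= phi a b D X.
Proof.
move=> hX hf. have [hp hL] := phi_spec X hX.
have := hf _ hL. by rewrite lf_div ler_pdivrMr // mul1r.
Qed.

Lemma phi_sup X : X != (0, 0) ->
  exists f, [/\ Good f, lf f X = phi a b D X & Info f X].
Proof.
move=> hX. have [hp hL] := phi_spec X hX.
set t := phi a b D X in hp hL *.
have nt : t != 0 by rewrite lt0r_neq0.
have [f [hg h1 hi]] := support _ hL.
exists f; split => //.
  by move: h1; rewrite lf_div => h1; rewrite -(divfK nt (lf f X)) h1 mul1r.
case: hi => [[i1 i2]|[i1 i2 i3]]; [left|right].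
  move: i1 i2 => /=; by rewrite !pmulr_lge0 ?invr_gt0.
split => //.
  move=> j1 j2; apply: i2 => /=; first by rewrite j1 mul0r.
  by rewrite pmulr_llt0 ?invr_gt0.
move=> j1 j2; apply: i3 => /=; first by rewrite j1.
by rewrite pmulr_llt0 ?invr_gt0.
Qed.

Hypotheses (hm21 : m2 < 1) (hm31 : m3 < 1).

Lemma min_neg (y : int * int) : Num.min y.1 y.2 < 0 -> y.1 < 0 \/ y.2 < 0.
Proof. by rewrite gt_min => /orP. Qed.

Lemma ptR_neq0 (y : int * int) : y.1 < 0 \/ y.2 < 0 -> ptR y != (0, 0) :> R * R.
Proof.
move=> h; apply/negP => /eqP [h1 h2].
case: h => h.
  have := intneg R _ h. rewrite h1; lra.
have := intneg R _ h. rewrite h2; lra.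
Qed.

Lemma drift (y : int * int) : Num.min y.1 y.2 < 0 ->
  phi a b D ((ptR y).1 + m2, (ptR y).2 + m3) - phi a b D (ptR y) <= mx.
Proof.
move=> /min_neg hy.
have hY := ptR_neq0 _ hy.
set X := ((ptR y).1 + m2, (ptR y).2 + m3).
have hneg : X.1 < 0 \/ X.2 < 0.
  move: (hm21) (hm31) (hm2) (hm3) => ? ? ? ?.
  rewrite /X /ptR /=; case: hy => h; have := intneg R _ h; move=> h'; [left|right]; lra.
have hX : X != (0, 0).
  apply/negP => /eqP e; rewrite e /= in hneg; case: hneg; lra.
have [f [hg hf hi]] := phi_sup X hX.
case: hi => [[i1 i2]|[i1 _ _]]; first by exfalso; case: hneg; lra.
have := phi_ge _ f hY hg.
rewrite -hf.
have -> : lf f X = lf f (ptR y) + lf f (m2, m3) by rewrite /lf /X /=; ring.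
lra.
Qed.

Variables (lam2 b12 b23 : R).
Hypotheses (hb12 : 0 < b12) (hb23 : 0 < b23).

Lemma phi_mono1 (i j : int) : 0 < i -> j < 0 ->
  phi a b D (ptR (0, j)) <= phi a b D (ptR (i, j)).
Proof.
move=> hi hj.
have hZ : ptR (0, j) != (0, 0) :> R * R by apply: ptR_neq0; right.
have hY : ptR (i, j) != (0, 0) :> R * R by apply: ptR_neq0; right.
have hj' := intneg R _ hj. have hi' : 0 < (i%:~R : R) by rewrite ltr0z.
have [f [hg hf hi2]] := phi_sup _ hZ.
have e0 : (0%:~R : R) = 0 by [].
case: hi2 => [[i1 i2]|[_ i2 _]]; first by exfalso; move: i2; rewrite /ptR /=; lra.
have hf1 : 0 <= f.1 by apply: i2; rewrite /ptR /= ?e0 //; lra.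
rewrite -hf. apply: le_trans (phi_ge _ f hY hg).
rewrite /lf /ptR /= e0 mulr0 add0r.
have : 0 <= f.1 * i%:~R by apply: mulr_ge0 => //; exact: ltW.
lra.
Qed.

Lemma phi_mono2 (i j : int) : i < 0 -> i < j ->
  phi a b D (ptR (i, i)) <= phi a b D (ptR (i, j)).
Proof.
move=> hi hij.
have hZ : ptR (i, i) != (0, 0) :> R * R by apply: ptR_neq0; left.
have hY : ptR (i, j) != (0, 0) :> R * R by apply: ptR_neq0; left.
have hi' := intneg R _ hi. have hij' : (i%:~R : R) < j%:~R by rewrite ltr_int.
have [f [hg hf hi2]] := phi_sup _ hZ.
case: hi2 => [[i1 i2]|[_ _ i3]]; first by exfalso; move: i1; rewrite /ptR /=; lra.
have hf2 : 0 <= f.2 by apply: i3; rewrite /ptR //=; lra.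
rewrite -hf. apply: le_trans (phi_ge _ f hY hg).
rewrite /lf /ptR /=.
have : 0 <= f.2 * (j%:~R - i%:~R) by apply: mulr_ge0 => //; lra.
lra.
Qed.

Lemma DR_le (y : int * int) : Num.min y.1 y.2 < 0 -> DR lam2 b12 b23 a b D y <= 0.
Proof.
move=> hmin; have hy := min_neg _ hmin.
rewrite /DR; apply: sumr_le0 => z _.
case: y hmin hy => i j /= hmin hy.
rewrite /rrate /=.
have c3 : ((0 < j) && (j <= i)) = false.
  apply/negP => /andP [h1 h2]; case: hy => h; lra.
have c4 : ((0 < i) && (i < j)) = false.
  apply/negP => /andP [h1 h2]; case: hy => h; lra.
rewrite c3 c4 !addr0.
case: ifP => [/andP [/andP [h1 h2] /eqP ->]|_].
  have -> : (i < j) = false by apply/negP => h; lra.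
  rewrite /= addr0.
  have hj : j < 0 by case: hy => h; lra.
  have := phi_mono1 _ _ h1 hj.
  move=> h; apply: mulr_ge0_le0; [exact: ltW| lra].
case: ifP => [/andP [h1 /eqP ->]|_]; last by rewrite addr0 mul0r.
rewrite add0r.
have hi : i < 0 by case: hy => h; lra.
have := phi_mono2 _ _ hi h1.
move=> h; apply: mulr_ge0_le0; [exact: ltW| lra].
Qed.

Lemma main_geo : mx < 0 /\ forall y : int * int, Num.min y.1 y.2 < 0 ->
  DR lam2 b12 b23 a b D y <= 0 /\
  phi a b D ((ptR y).1 + m2, (ptR y).2 + m3) - phi a b D (ptR y) <= mx.
Proof. split; first exact: mxn. move=> y hy; split; [exact: DR_le | exact: drift]. Qed.

End Geo.

Theorem lemma4 (R : realType) (l1 l2 l3 b12 b23 a b : R) :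
  0 < l1 -> 0 < l2 -> 0 < l3 -> 0 < b12 -> 0 < b23 ->
  l1 + l2 + l3 + b12 + b23 = 1 ->
  l1 < l2 -> l1 < l3 -> 0 < a -> 0 < b ->
  exists D0 : R, forall D : R, 0 < D -> D0 < D ->
    exists C eps : R, 0 < C /\ 0 < eps /\
      forall y : int * int, Num.min y.1 y.2 < 0 -> C < phi a b D (ptR y) ->
        DR l2 b12 b23 a b D y <= 0 /\
        phi a b D ((ptR y).1 + (MF l1 l2 l3).1, (ptR y).2 + (MF l1 l2 l3).2)
          - phi a b D (ptR y) < - (5 * eps).
Proof.
move=> hl1 hl2 hl3 h12 h23 hsum hl12 hl13 ha hb.
have hm2 : 0 < l2 - l1 by lra. have hm3 : 0 < l3 - l1 by lra.
have hm21 : l2 - l1 < 1 by lra. have hm31 : l3 - l1 < 1 by lra.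
exists (1 + a / b + (l2 - l1) / (l3 - l1) + (l3 - l1) / (l2 - l1)).
move=> D _ hDD.
have hab : 0 <= a / b by apply: divr_ge0; lra.
have h23' : 0 <= (l2 - l1) / (l3 - l1) by apply: divr_ge0; lra.
have h32' : 0 <= (l3 - l1) / (l2 - l1) by apply: divr_ge0; lra.
have hD : 1 < D by lra.
have hDb : a < b * (D - 1).
  have -> : a = b * (a / b) by field; rewrite lt0r_neq0.
  rewrite ltr_pM2l //; lra.
have hM2 : l2 - l1 < D * (l3 - l1).
  have -> : l2 - l1 = ((l2 - l1) / (l3 - l1)) * (l3 - l1) by field; rewrite lt0r_neq0.
  rewrite ltr_pM2r //; lra.
have hM3 : l3 - l1 < D * (l2 - l1).
  have -> : l3 - l1 = ((l3 - l1) / (l2 - l1)) * (l2 - l1) by field; rewrite lt0r_neq0.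
  rewrite ltr_pM2r //; lra.
have hD0 : 0 < D by lra.
have na : a != 0 by rewrite lt0r_neq0. have nb : b != 0 by rewrite lt0r_neq0.
have nD : D != 0 by rewrite lt0r_neq0.
have hT3P : ell a b (T3 a b D) = 1 /\ normal_dir a b (T3 a b D) (- D, 1).
  set S := b ^+ 2 * (D - 1) ^+ 2 + a * b.
  have hS : 0 < S by rewrite /S; apply: ltr_wpDl; [apply: mulr_ge0; exact: sqr_ge0 | exact: mulr_gt0].
  have nS : S != 0 by rewrite lt0r_neq0.
  set p := Num.sqrt (a / S).
  have hp : 0 < p by rewrite sqrtr_gt0 divr_gt0.
  have hp2 : p ^+ 2 = a / S by rewrite sqr_sqrtr // ltW // divr_gt0.
  set W := (- (b * p * (D - 1)) / a, - (b * p * (D - 1)) / a + p).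
  have hW : ell a b W = 1 /\ normal_dir a b W (- D, 1).
    split.
      rewrite /ell /W /=.
      have -> : a * (- (b * p * (D - 1)) / a) ^+ 2 + b * (- (b * p * (D - 1)) / a - (- (b * p * (D - 1)) / a + p)) ^+ 2
        = S / a * p ^+ 2 by rewrite /S; field.
      by rewrite hp2; field; rewrite na nS.
    exists (2 * b * p); split; first by rewrite !mulr_gt0.
    rewrite /grad_ell /W /=; congr pair; field; by rewrite ?na ?nb ?nD ?nS.
  have h := @xgetI _ (0, 0) [set P | ell a b P = 1 /\ normal_dir a b P (- D, 1)] W hW.
  exact: h.
have hT2P : ell a b (T2 a b D) = 1 /\ normal_dir a b (T2 a b D) (1, - D).
  set S := b ^+ 2 * (D - 1) ^+ 2 + a * b * D ^+ 2.
  have hS : 0 < S.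
    rewrite /S; apply: ltr_wpDl; first by apply: mulr_ge0; exact: sqr_ge0.
    by rewrite !mulr_gt0 // exprn_gt0.
  have nS : S != 0 by rewrite lt0r_neq0.
  set q := Num.sqrt (a * D ^+ 2 / S).
  have hq' : 0 < a * D ^+ 2 / S by rewrite divr_gt0 // mulr_gt0 // exprn_gt0.
  have hq : 0 < q by rewrite sqrtr_gt0.
  have hq2 : q ^+ 2 = a * D ^+ 2 / S by rewrite sqr_sqrtr // ltW.
  set W := (- (b * q * (D - 1)) / (a * D), - (b * q * (D - 1)) / (a * D) - q).
  have hW : ell a b W = 1 /\ normal_dir a b W (1, - D).
    split.
      rewrite /ell /W /=.
      have -> : a * (- (b * q * (D - 1)) / (a * D)) ^+ 2 + b * (- (b * q * (D - 1)) / (a * D) - (- (b * q * (D - 1)) / (a * D) - q)) ^+ 2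
        = S / (a * D ^+ 2) * q ^+ 2 by rewrite /S; field; by rewrite ?na ?nb ?nD ?nS.
      by rewrite hq2; field; rewrite ?na ?nb ?nD ?nS.
    exists (2 * b * q / D); split; first by rewrite divr_gt0 // !mulr_gt0.
    rewrite /grad_ell /W /=; congr pair; field; by rewrite ?na ?nb ?nD ?nS.
  have h := @xgetI _ (0, 0) [set P | ell a b P = 1 /\ normal_dir a b P (1, - D)] W hW.
  exact: h.
move eT3 : (T3 a b D) hT3P => [x3 y3] [e3 [k [hk hg]]].
move: hg; rewrite /grad_ell /= => -[g1 g2].
have p3 : 0 < y3 - x3 by nra.
have x3e : a * x3 = - (b * (y3 - x3) * (D - 1)).
  have h : 2 * (a * x3 + b * (y3 - x3) * (D - 1)) = (2 * (a * x3 + b * (x3 - y3)) - k * - D) - D * (k * 1 - - (2 * (b * (x3 - y3)))) by ring.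
  rewrite g1 g2 !subrr mulr0 subr0 in h.
  have : a * x3 + b * (y3 - x3) * (D - 1) = 0 by lra.
  lra.
move eT2 : (T2 a b D) hT2P => [x2 y2] [e2 [k' [hk' hg]]].
move: hg; rewrite /grad_ell /= => -[g1' g2'].
have q2 : 0 < x2 - y2.
  have : 0 < k' * D by apply: mulr_gt0.
  nra.
have x2e : a * D * x2 = - (b * (x2 - y2) * (D - 1)).
  have h : 2 * (a * D * x2 + b * (x2 - y2) * (D - 1)) = D * (2 * (a * x2 + b * (x2 - y2)) - k' * 1) + (- (2 * (b * (x2 - y2))) - k' * - D) by ring.
  rewrite g1' g2' !subrr mulr0 addr0 in h.
  have : a * D * x2 + b * (x2 - y2) * (D - 1) = 0 by lra.
  lra.
rewrite /ell /= in e2 e3.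
have hq : 0 < b * (x2 - y2) by apply: mulr_gt0.
have hp : 0 < b * (y3 - x3) by apply: mulr_gt0.
have hK3P : (K3 a b D).1 = 0 /\ tangent_line a b (T3 a b D) (K3 a b D).
  rewrite /K3 eT3.
  pose W : R * R := (0, (b * (y3 - x3))^-1).
  have hW : W.1 = 0 /\ tangent_line a b (x3, y3) W.
    split => //. apply/tangentE. rewrite /Bf /ell /= e3.
    have -> : a * x3 * 0 + b * (x3 - y3) * (0 - (b * (y3 - x3))^-1) = b * (y3 - x3) / (b * (y3 - x3)) by ring.
    by rewrite mulfV // lt0r_neq0.
  have h := @xgetI _ (0, 0) [set X | X.1 = 0 /\ tangent_line a b (x3, y3) X] W hW.
  exact: h.
have hK2P : (K2 a b D).2 = 0 /\ tangent_line a b (T2 a b D) (K2 a b D).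
  rewrite /K2 eT2.
  have hc : 0 < a * x2 + b * (x2 - y2).
    have : D * (a * x2 + b * (x2 - y2)) = b * (x2 - y2).
      have -> : D * (a * x2 + b * (x2 - y2)) = a * D * x2 + D * (b * (x2 - y2)) by ring.
      rewrite x2e; ring.
    move=> h. have : 0 < D * (a * x2 + b * (x2 - y2)) by rewrite h.
    by rewrite pmulr_rgt0.
  pose W : R * R := ((a * x2 + b * (x2 - y2))^-1, 0).
  have hW : W.2 = 0 /\ tangent_line a b (x2, y2) W.
    split => //. apply/tangentE. rewrite /Bf /ell /= e2.
    have -> : a * x2 * (a * x2 + b * (x2 - y2))^-1 + b * (x2 - y2) * ((a * x2 + b * (x2 - y2))^-1 - 0) = (a * x2 + b * (x2 - y2)) / (a * x2 + b * (x2 - y2)) by ring.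
    by rewrite mulfV // lt0r_neq0.
  have h := @xgetI _ (0, 0) [set X | X.2 = 0 /\ tangent_line a b (x2, y2) X] W hW.
  exact: h.
move eK3 : (K3 a b D) hK3P => [z3 u3] /= [hz3]; rewrite hz3 eT3 => /tangentE.
rewrite /Bf /ell /= e3 => k3b.
move eK2 : (K2 a b D) hK2P => [u2 z2] /= [hz2]; rewrite hz2 eT2 => /tangentE.
rewrite /Bf /ell /= e2 => k2b.
have k3b' : b * (y3 - x3) * u3 = 1 by rewrite -k3b; ring.
have k2b' : a * x2 * u2 + b * (x2 - y2) * u2 = 1 by rewrite -k2b; ring.
rewrite hz3 in eK3. rewrite hz2 in eK2.
have [mxn G] := main_geo R a b D x2 y2 x3 y3 u2 u3 ha hb hD hDb e2 q2 x2e e3 p3 x3e k2b' k3b'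
  (l2 - l1) (l3 - l1) hm2 hm3 hM2 hM3 eT2 eT3 eK2 eK3 hm21 hm31 l2 b12 b23 h12 h23.
exists 1, (- mx R a b x2 y2 x3 y3 (l2 - l1) (l3 - l1) / 10).
split; first exact: ltr01.
split; first by rewrite divr_gt0 // oppr_gt0.
move=> y hy _.
have [G1 G2] := G y hy.
split => //.
rewrite /MF /=.
lra.
Qed.
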